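(* For every epitopological space $X$, $R_1\pi_0^{\mathrm{ps}}X=\pi_0^{\mathrm{epi}}X$; and for every topological space $X$ (regarded as an epitopological space), $R_2\pi_0^{\mathrm{epi}}X=\pi_0^{\mathrm{top}}X$. That is, $R_1\circ\pi_0^{\mathrm{ps}}$ restricted to $\mathsf{EpiTop}$ equals $\pi_0^{\mathrm{epi}}$, and $R_2\circ\pi_0^{\mathrm{epi}}$ restricted to $\mathsf{Top}$ equals $\pi_0^{\mathrm{top}}$.
   Context: For a set $X$, $U(X)$ is the set of ultrafilters on $X$, $\dot x$ the principal ultrafilter at $x$; for $f\colon X\to Y$, $f_*\mathscr F=\{S\subset Y:f^{-1}(S)\in\mathscr F\}$. A pseudotopological space is a set $X$ with a relation $u\subset U(X)\times X$ containing all $(\dot x,x)$; write $\mathscr U\to x$; for a filter $\mathscr F$, $\mathscr F\to x$ means every ultrafilter containing $\mathscr F$ converges to $x$. Continuous maps: $\mathscr U\to x\Rightarrow f_*\mathscr U\to f(x)$ (category $\mathsf{PsTop}$). Initial structure for maps $f_j\colon X\to X_j$: $\mathscr U\to x$ iff $(f_j)_*\mathscr U\to f_j(x)$ for all $j$. Final structure for a map $q\colon X\to Z$: $\mathscr U\to z$ iff $\mathscr U=\dot z$ or $\mathscr U=q_*\mathscr V$, $z=q(x)$ for some $\mathscr V\to x$ in $X$. Topological spaces are regarded as pseudotopological spaces via ultrafilter convergence (giving the full subcategory $\mathsf{Top}$). For pseudotopological $X,Y$, $Y^X$ is the set of continuous maps with: a filter $\mathscr F\to f$ iff for every filter $\mathscr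 G\to x$ in $X$, $\mathrm{ev}_*(\mathscr F\times\mathscr G)\to f(x)$. A pseudotopological space is epitopological if its structure is initial w.r.t. some family of maps $X\to Z_j^{Y_j}$ with $Y_j,Z_j$ topological; these form the full subcategory $\mathsf{EpiTop}$. For a pseudotopological space $X$, $R_1X$ is the epitopological space on the same set whose structure is the smallest epitopological structure containing that of $X$ (the concrete reflection into $\mathsf{EpiTop}$). For a pseudotopological space $X$, $RX$ is the topological space on the same set in which $S$ is open iff $S\in\mathscr U$ whenever $\mathscr U\to x\in S$; $R_2$ is $R$ restricted to epitopological spaces. A path is a continuous map from $[0,1]$. $\pi_0^{\mathrm{ps}}X$: set of path components of a pseudotopological space $X$ with the final pseudotopology w.r.t. the projection. $\pi_0^{\mathrm{epi}}X$: set of path components of an epitopological space $X$ with the smallest epitopological structure making the projection continuous. $\pi_0^{\mathrm{top}}X$: set of path components of a topological space with the quotient topology. *)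

(* Defs.v *)
(* self-contained development of pseudotopological spaces
   via ultrafilter convergence. Sets are predicates T -> Prop; a "family"
   (candidate filter) on T is a predicate on sets. *)
From Stdlib Require Import Reals.

Definition fam (T : Type) := (T -> Prop) -> Prop.

Definition principal {T : Type} (x : T) : fam T := fun S => S x.

Definition push {T T' : Type} (f : T -> T') (F : fam T) : fam T' :=
  fun S => F (fun x => S (f x)).

Definition is_filter {T : Type} (F : fam T) : Prop :=
  F (fun _ => True) /\ ~ F (fun _ => False) /\
  (forall A B : T -> Prop, F A -> F B -> F (fun x => A x /\ B x)) /\
  (forall A B : T -> Prop, (forall x, A x -> B x) -> F A -> F B).

Definition is_ultra {T : Type} (U : fam T) : Prop :=
  is_filter U /\ forall S : T -> Prop, U S \/ U (fun x => ~ S x).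

Definition subfam {T : Type} (F G : fam T) : Prop := forall S, F S -> G S.
Definition fam_eq {T : Type} (F G : fam T) : Prop := forall S, F S <-> G S.

(* a pseudotopological structure: a convergence relation between
   ultrafilters and points (only its values on ultrafilters matter) *)
Definition ps_struct (T : Type) := fam T -> T -> Prop.
Definition is_pstop {T : Type} (c : ps_struct T) : Prop :=
  forall x, c (principal x) x.

Record PsTop := { pcar :> Type; pconv : ps_struct pcar; pconv_pt : is_pstop pconv }.

Definition filt_conv {T : Type} (c : ps_struct T) (G : fam T) (x : T) : Prop :=
  forall U, is_ultra U -> subfam G U -> c U x.

Definition ps_cont {T T' : Type} (c : ps_struct T) (c' : ps_struct T') (f : T -> T') : Prop :=
  forall U x, is_ultra U -> c U x -> c' (push f U) (f x).

Definition struct_le {T : Type} (c c' : ps_struct T) : Prop :=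
  forall U x, is_ultra U -> c U x -> c' U x.
Definition struct_eq {T : Type} (c c' : ps_struct T) : Prop :=
  struct_le c c' /\ struct_le c' c.

Record Top := {
  tcar :> Type;
  topen : (tcar -> Prop) -> Prop;
  topen_full : topen (fun _ => True);
  topen_inter : forall A B, topen A -> topen B -> topen (fun x => A x /\ B x);
  topen_union : forall F : (tcar -> Prop) -> Prop, (forall S, F S -> topen S) ->
                  topen (fun x => exists S, F S /\ S x) }.

Definition top_conv {T : Type} (op : (T -> Prop) -> Prop) : ps_struct T :=
  fun U x => forall S, op S -> S x -> U S.

Definition ps_of_top (X : Top) : PsTop :=
  {| pcar := tcar X; pconv := top_conv (topen X);
     pconv_pt := fun x S _ Sx => Sx |}.

(* Z^Y for topological Y, Z: continuous maps with the continuous convergence *)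
Definition cmap (Y Z : Top) : Type :=
  {g : tcar Y -> tcar Z | ps_cont (top_conv (topen Y)) (top_conv (topen Z)) g}.

Definition ev {Y Z : Top} (p : cmap Y Z * tcar Y) : tcar Z := proj1_sig (fst p) (snd p).

Definition prod_fam {A B : Type} (F : fam A) (G : fam B) : fam (A * B) :=
  fun S => exists (P : A -> Prop) (Q : B -> Prop), F P /\ G Q /\
             forall a b, P a -> Q b -> S (a, b).

Definition fun_conv (Y Z : Top) : ps_struct (cmap Y Z) :=
  fun F g => forall (G : fam (tcar Y)) (y : tcar Y), is_filter G ->
    filt_conv (top_conv (topen Y)) G y ->
    filt_conv (top_conv (topen Z)) (push ev (prod_fam F G)) (proj1_sig g y).

(* epitopological: initial w.r.t. some family X -> Z_j^{Y_j}, Y_j, Z_j topological *)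
Definition is_epitop {T : Type} (c : ps_struct T) : Prop :=
  exists (J : Type) (Y Z : J -> Top) (f : forall j, T -> cmap (Y j) (Z j)),
    forall U x, is_ultra U ->
      (c U x <-> forall j, fun_conv (Y j) (Z j) (push (f j) U) (f j x)).

Definition R1 {T : Type} (c : ps_struct T) : ps_struct T :=
  fun U x => forall c' : ps_struct T, is_pstop c' -> is_epitop c' ->
                struct_le c c' -> c' U x.

Definition R_open {T : Type} (c : ps_struct T) : (T -> Prop) -> Prop :=
  fun S => forall U x, is_ultra U -> c U x -> S x -> U S.

Definition unitI : Type := {r : R | (0 <= r <= 1)%R}.

Lemma unitI0_pf : (0 <= 0 <= 1)%R.
Proof. split; [apply Rle_refl | apply Rle_0_1]. Qed.
Lemma unitI1_pf : (0 <= 1 <= 1)%R.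
Proof. split; [apply Rle_0_1 | apply Rle_refl]. Qed.

Definition I0 : unitI := exist _ 0%R unitI0_pf.
Definition I1 : unitI := exist _ 1%R unitI1_pf.

Definition convI : ps_struct unitI :=
  fun U t => forall eps : R, (0 < eps)%R ->
    U (fun s => (Rabs (proj1_sig s - proj1_sig t) < eps)%R).

Definition path_rel (X : PsTop) (x y : pcar X) : Prop :=
  exists p : unitI -> pcar X, ps_cont convI (pconv X) p /\ p I0 = x /\ p I1 = y.

Definition pc (X : PsTop) : Type :=
  {S : pcar X -> Prop | exists x, S = path_rel X x}.

Definition pq (X : PsTop) (x : pcar X) : pc X :=
  exist _ (path_rel X x) (ex_intro _ x eq_refl).

(* pi_0^ps: final pseudotopology w.r.t. the projection *)
Definition pi0_ps (X : PsTop) : ps_struct (pc X) :=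
  fun U z => fam_eq U (principal z) \/
    exists (V : fam (pcar X)) (x : pcar X),
      is_ultra V /\ pconv X V x /\ fam_eq U (push (pq X) V) /\ z = pq X x.

Definition pi0_epi (X : PsTop) : ps_struct (pc X) :=
  fun U z => forall c' : ps_struct (pc X), is_pstop c' -> is_epitop c' ->
    ps_cont (pconv X) c' (pq X) -> c' U z.

Definition pi0_top_open (X : Top) : (pc (ps_of_top X) -> Prop) -> Prop :=
  fun S => topen X (fun x => S (pq (ps_of_top X) x)).

(* Main.v *)
Require Import Defs.
From mathcomp Require classical_sets filter.
From Stdlib Require Import FunctionalExtensionality PropExtensionality Classical.

Lemma ultra_ext {T : Type} (F : fam T) : is_filter F ->
  exists U, is_ultra U /\ subfam F U.
Proof.
intros [HT [H0 [HI HS]]].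
assert (PF : @mathcomp.classical.filter.ProperFilter T F).
{ constructor.
  - exact H0.
  - constructor.
    + exact HT.
    + intros A B; apply HI.
    + intros P Q; apply HS. }
destruct (mathcomp.classical.filter.ultraFilterLemma PF) as [G [GU sub]].
exists G. split; [|exact sub].
pose proof (@mathcomp.classical.filter.ultra_proper _ _ GU) as GP.
destruct GP as [GnE GF]. destruct GF as [GT GI GS].
split; [split; [exact GT|split; [exact GnE|split]]|].
- intros A B; apply GI.
- intros A B; apply GS.
- intro S. exact (mathcomp.classical.filter.in_ultra_setVsetC S GU).
Qed.

Lemma fam_eq_eq {T : Type} (F G : fam T) : fam_eq F G -> F = G.
Proof.
intro H. apply functional_extensionality; intro S.
apply propositional_extensionality; apply H.
Qed.

Lemma push_ultra {T T' : Type} (f : T -> T') (V : fam T) :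
  is_ultra V -> is_ultra (push f V).
Proof.
intros [[HT [H0 [HI HS]]] Hu]. unfold push.
split; [split; [exact HT|split; [exact H0|split]]|].
- intros A B HA HB. exact (HI _ _ HA HB).
- intros A B HAB HA. apply (HS _ _ (fun x => HAB (f x)) HA).
- intro S. apply (Hu (fun x => S (f x))).
Qed.

Lemma le_iff_cont (X : PsTop) (c' : ps_struct (pc X)) : is_pstop c' ->
  (struct_le (pi0_ps X) c' <-> ps_cont (pconv X) c' (pq X)).
Proof.
intro Hp. split.
- intros H V x HV Hc. apply H. apply push_ultra; exact HV.
  right. exists V, x. split; [exact HV|split; [exact Hc|split; [intro S; tauto|reflexivity]]].
- intros Hct U z HU [Hz | [V0 [x0 [HV0 [Hc0 [HUe Hze]]]]]].
  + apply fam_eq_eq in Hz. subst. apply Hp.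
  + apply fam_eq_eq in HUe. subst. apply Hct; auto.
Qed.

Definition unitTop : Top.
refine {| tcar := unit; topen := fun _ => True |}; auto.
Defined.

Section TopEpi.
Variable T : Top.

Definition constmap (z : tcar T) : cmap unitTop T.
exists (fun _ => z).
intros U x [[HT [_ [_ HS]]] _] _ S _ Sz. unfold push. simpl.
apply (HS (fun _ => True)); auto.
Defined.

Lemma top_epitop : is_epitop (top_conv (topen T)).
Proof.
exists unit, (fun _ => unitTop), (fun _ => T), (fun _ => constmap).
intros U x HU. split.
- intros Hc _ G y HG HGy W HW HsW S HS Sx.
  apply HsW. unfold push, prod_fam.
  exists (fun a => S (proj1_sig a tt)), (fun _ => True).
  split; [|split].
  + unfold push. simpl. apply Hc; auto.
  + destruct HG as [HT _]; exact HT.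
  + intros a b Ha _. destruct b; exact Ha.
- intros H. specialize (H tt (principal tt) tt).
  assert (HG : is_filter (principal (T:=unit) tt)).
  { unfold principal; split; [auto|split; [auto|split; auto]]. }
  assert (Hf : filt_conv (top_conv (topen unitTop)) (principal tt) tt).
  { intros U' HU' Hs S _ St. apply Hs. exact St. }
  specialize (H HG Hf U HU).
  simpl in H. apply H.
  intros S [P [Q [HP [HQ HPQ]]]].
  unfold push in HP. simpl in HP.
  destruct HU as [[_ [_ [_ HS]]] _].
  apply (HS _ _ (fun z Pz => HPQ _ tt Pz HQ) HP).
Qed.
End TopEpi.

Definition quotTop (X : Top) : Top.
refine {| tcar := pc (ps_of_top X);
          topen := fun S => topen X (fun x => S (pq (ps_of_top X) x)) |}.
- apply topen_full.
- intros A B HA HB. apply (topen_inter X _ _ HA HB).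
- intros F HF.
  pose proof (topen_union X (fun S' => exists S, F S /\ S' = (fun x => S (pq (ps_of_top X) x)))) as HU.
  match goal with |- topen X ?G => replace G with
     (fun x => exists S' : tcar X -> Prop, (exists S, F S /\ S' = (fun x => S (pq (ps_of_top X) x))) /\ S' x) end.
  + apply HU. intros S' [S [HS ->]]. apply HF; exact HS.
  + apply functional_extensionality; intro x; apply propositional_extensionality.
    split.
    * intros [S' [[S [HS ->]] HSx]]. exists S; auto.
    * intros [S [HS HSx]]. exists (fun x => S (pq (ps_of_top X) x)). split; [exists S; auto|exact HSx].
Defined.

Theorem proposition4p3 :
  (forall X : PsTop, is_epitop (pconv X) ->
     struct_eq (R1 (pi0_ps X)) (pi0_epi X)) /\
  (forall (X : Top) (S : pc (ps_of_top X) -> Prop),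
     R_open (pi0_epi (ps_of_top X)) S <-> pi0_top_open X S).
Proof.
split.
- intros X _. split.
  + intros U z HU H c' Hp He Hcont. apply H; auto.
    apply (proj2 (le_iff_cont X c' Hp)); exact Hcont.
  + intros U z HU H c' Hp He Hle. apply H; auto.
    apply (proj1 (le_iff_cont X c' Hp)); exact Hle.
- intros X S. split.
  + intros HR. unfold pi0_top_open.
    set (A := fun x => S (pq (ps_of_top X) x)).
    pose proof (topen_union X (fun O => topen X O /\ forall y, O y -> A y)) as HUn.
    change (topen X A).
    match type of HUn with _ -> topen X ?G => assert (E : G = A) end.
    2:{ rewrite <- E. apply HUn. intros O [HO _]; exact HO. }
    * apply functional_extensionality; intro x; apply propositional_extensionality.
      split.
      -- intros [O [[_ HOA] HOx]]. apply HOA; exact HOx.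
      -- intros Ax. apply NNPP; intro Hno.
         set (G := fun B : tcar X -> Prop => exists O, topen X O /\ O x /\
                     forall y, O y -> ~ A y -> B y).
         assert (HG : is_filter G).
         { split; [|split; [|split]].
           - exists (fun _ => True). split; [apply topen_full|split; auto].
           - intros [O [HO [HOx HOB]]]. apply Hno. exists O. split; [split|]; auto.
             intros y Oy. apply NNPP; intro nA. exact (HOB y Oy nA).
           - intros B1 B2 [O1 [H1 [x1 F1]]] [O2 [H2 [x2 F2]]].
             exists (fun y => O1 y /\ O2 y). split; [apply topen_inter; auto|split; auto].
             intros y [y1 y2] nA. split; auto.
           - intros B1 B2 Hsub [O [HO [HOx HOB]]]. exists O. split; auto. }
         destruct (ultra_ext G HG) as [V [HV HGV]].
         assert (Hc : top_conv (topen X) V x).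
         { intros S' HS' S'x. apply HGV. exists S'. split; auto. }
         assert (HVA : V A).
         { apply (HR (push (pq (ps_of_top X)) V) (pq (ps_of_top X) x)).
           - apply push_ultra; exact HV.
           - intros c' _ _ Hcont. apply Hcont; auto.
           - exact Ax. }
         assert (HVnA : V (fun y => ~ A y)).
         { apply HGV. exists (fun _ => True). split; [apply topen_full|split; auto]. }
         destruct HV as [[_ [H0 [HI HS]]] _].
         apply H0. pose proof (HI _ _ HVA HVnA) as HI'.
         revert HI'. apply HS. intros y [a b]; exact (b a).
  + intros HS U z HU Hepi Sz.
    apply (Hepi (top_conv (topen (quotTop X)))).
    * intros w S' _ S'w. exact S'w.
    * exact (top_epitop (quotTop X)).
    * intros V x HV Hc T' HT' T'x. unfold push. apply Hc; [exact HT'|exact T'x].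
    * exact HS.
    * exact Sz.
Qed.
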